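(* Let $\mathbb{H}$ be the real quaternion algebra with standard basis $\{1,i,j,k\}$, and let $p\in\mathbb{R}[x]$ be any nonconstant real polynomial. Then $$\{p(ab)-p(ba)\mid a,b\in\mathbb{H}\}=\{bi+cj+dk\mid b,c,d\in\mathbb{R}\}.$$
   Context: $\mathbb{H}$ has multiplication determined by $i^2=j^2=k^2=ijk=-1$. *)

(* Defs.v *)
From HB Require Import structures.
From mathcomp Require Import all_boot all_order all_algebra.
From mathcomp Require Import reals.
Set Implicit Arguments. Unset Strict Implicit. Unset Printing Implicit Defensive.
Import Order.TTheory GRing.Theory Num.Theory.
Local Open Scope ring_scope.

(* Real quaternions a + b i + c j + d k, with i^2=j^2=k^2=ijk=-1. *)
Record quat (R : realType) := Quat { qre : R; qi : R; qj : R; qk : R }.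

Section Quat.
Variable R : realType.

Definition qadd (x y : quat R) : quat R :=
  Quat (qre x + qre y) (qi x + qi y) (qj x + qj y) (qk x + qk y).
Definition qopp (x : quat R) : quat R :=
  Quat (- qre x) (- qi x) (- qj x) (- qk x).
Definition qsub (x y : quat R) : quat R := qadd x (qopp y).

Definition qmul (x y : quat R) : quat R :=
  Quat (qre x * qre y - qi x * qi y - qj x * qj y - qk x * qk y)
       (qre x * qi y + qi x * qre y + qj x * qk y - qk x * qj y)
       (qre x * qj y - qi x * qk y + qj x * qre y + qk x * qi y)
       (qre x * qk y + qi x * qj y - qj x * qi y + qk x * qre y).

Definition qconst (c : R) : quat R := Quat c 0 0 0.

Definition qeval (p : {poly R}) (q : quat R) : quat R :=
  foldr (fun c acc => qadd (qmul acc q) (qconst c)) (qconst 0) (polyseq p).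

End Quat.

(* Main.v *)
Require Import Defs.
From HB Require Import structures.
From mathcomp Require Import all_boot all_order all_algebra.
From mathcomp Require Import reals.
From mathcomp Require Import complex polyrcf ring lra.
Notation cRe := (@complex.Re _).
Notation cIm := (@complex.Im _).
Import Order.TTheory GRing.Theory Num.Theory.
Local Open Scope ring_scope.
Local Open Scope complex_scope.
Set Implicit Arguments. Unset Strict Implicit.

Section S.
Variable R : realType.

Definition psi (u1 u2 u3 : R) (z : R[i]) : quat R :=
  Quat (cRe z) (cIm z * u1) (cIm z * u2) (cIm z * u3).

Lemma psiM u1 u2 u3 (hu : u1^+2 + u2^+2 + u3^+2 = 1) z1 z2 :
  qmul (psi u1 u2 u3 z1) (psi u1 u2 u3 z2) = psi u1 u2 u3 (z1 * z2).
Proof.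
case: z1 => a b; case: z2 => c d; rewrite /psi /qmul /=.
congr Quat; try ring.
have -> : a * c - b * u1 * (d * u1) - b * u2 * (d * u2) - b * u3 * (d * u3)
  = a * c - b * d * (u1^+2 + u2^+2 + u3^+2) by ring.
by rewrite hu mulr1.
Qed.

Definition hornC (l : seq R) (z : R[i]) : R[i] :=
  foldr (fun c acc => acc * z + c%:C) 0 l.

Lemma psi_qeval u1 u2 u3 (hu : u1^+2 + u2^+2 + u3^+2 = 1) (p : {poly R}) z :
  qeval p (psi u1 u2 u3 z) = psi u1 u2 u3 (hornC p z).
Proof.
rewrite /qeval /hornC; elim: (polyseq p) => [|c l IH] /=.
  by rewrite /psi /qconst /= !mul0r.
rewrite IH psiM //; case: (_ * z) => a b.
rewrite /psi /qadd /qconst /=; congr Quat; ring.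
Qed.

Lemma hornCE l z : hornC l z = \sum_(k < size l) (l`_k)%:C * z ^+ k.
Proof.
elim: l => [|c l IH]; first by rewrite big_ord0.
rewrite /= big_ord_recl /= -/(hornC l z) IH mulr_suml expr0 mulr1 addrC.
congr (_ + _); apply: eq_bigr => i _.
by rewrite exprSr mulrA.
Qed.


Lemma Im_horn (p : {poly R}) (w : R[i]) (s : R) :
  cIm (hornC p (s%:C * w)) = (\poly_(k < size p) (p`_k * cIm (w ^+ k))).[s].
Proof.
rewrite hornCE horner_poly.
apply: (big_rec2 (fun y1 y2 => cIm y1 = y2)) => // i y1 y2 _ <-.
rewrite exprMn -rmorphXn.
case: (w ^+ i) => a b; case: y1 => c d /=.
ring.
Qed.

Lemma unbounded (g : {poly R}) : (1 < size g)%N ->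
  forall M, exists s, M <= `|g.[s]|.
Proof.
move=> hg M.
have g0 : lead_coef g != 0.
  by rewrite lead_coef_eq0 -size_poly_eq0; case: (size g) hg.
case: (ltrgtP (lead_coef g) 0) => hl; last by rewrite hl eqxx in g0.
- have hl' : 0 < lead_coef (- g) by rewrite lead_coefN oppr_gt0.
  have hs : (1 < size (- g))%N by rewrite size_polyN.
  have [n hn] := poly_lim_infty M hl' hs.
  exists n; have := hn n (lexx n); rewrite hornerN => h.
  by apply: (le_trans h); rewrite -normrN ler_norm.
- have [n hn] := poly_lim_infty M hl hg.
  by exists n; apply: (le_trans (hn n (lexx n))); rewrite ler_norm.
Qed.


Definition wr (p : {poly R}) : R[i] := ((size p).-1).-root (Complex 0 1).

Lemma g_size (p : {poly R}) : (1 < size p)%N ->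
  leq 2 (size (\poly_(k < size p) (p`_k * cIm (wr p ^+ k)))).
Proof.
move=> hp; rewrite size_poly_eq //.
rewrite /wr rootCK; last by case: (size p) hp => [|[|n]].
rewrite /= mulr1 -lead_coefE lead_coef_eq0 -size_poly_eq0.
by case: (size p) hp.
Qed.

Lemma qmulA (a b c : quat R) : qmul a (qmul b c) = qmul (qmul a b) c.
Proof. case: a => ? ? ? ?; case: b => ? ? ? ?; case: c => ? ? ? ?; rewrite /qmul /=; congr Quat; ring. Qed.

Lemma qmul1 (a : quat R) : qmul (qconst 1) a = a.
Proof. case: a => ? ? ? ?; rewrite /qmul /qconst /=; congr Quat; ring. Qed.

Lemma key (u1 u2 u3 v1 v2 v3 : R) z :
  u1^+2 + u2^+2 + u3^+2 = 1 -> v1^+2 + v2^+2 + v3^+2 = 1 ->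
  0 < (u1+v1)^+2 + (u2+v2)^+2 + (u3+v3)^+2 ->
  exists a b, qmul a b = psi u1 u2 u3 z /\ qmul b a = psi v1 v2 v3 z.
Proof.
move=> hu hv hn.
set N := (u1+v1)^+2 + (u2+v2)^+2 + (u3+v3)^+2 in hn.
have N0 : N != 0 by rewrite gt_eqF.
pose a := Quat 0 (u1+v1) (u2+v2) (u3+v3).
pose ai := Quat 0 (-(u1+v1)/N) (-(u2+v2)/N) (-(u3+v3)/N).
have h1 : qmul a ai = qconst 1.
  rewrite /qmul /qconst /=; congr Quat; rewrite /N; field; by rewrite -/N.
have h2 : qmul ai a = qconst 1.
  rewrite /qmul /qconst /=; congr Quat; rewrite /N; field; by rewrite -/N.
have h3 : qmul (psi u1 u2 u3 z) a = qmul a (psi v1 v2 v3 z).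
  case: z => r t; rewrite /psi /qmul /=; congr Quat; try ring.
  have -> : r * 0 - t * u1 * (u1 + v1) - t * u2 * (u2 + v2) - t * u3 * (u3 + v3)
    = - t * (u1 * v1 + u2 * v2 + u3 * v3) - t * (u1^+2 + u2^+2 + u3^+2) by ring.
  rewrite hu -hv; ring.
exists a, (qmul ai (psi u1 u2 u3 z)); split.
  by rewrite qmulA h1 qmul1.
by rewrite -qmulA h3 qmulA h2 qmul1.
Qed.


Lemma decomp (q : quat R) : exists u1 u2 u3, u1^+2 + u2^+2 + u3^+2 = 1 /\
  q = psi u1 u2 u3 (Complex (qre q) (Num.sqrt (qi q ^+ 2 + qj q ^+ 2 + qk q ^+ 2))).
Proof.
case: q => r b c d /=.
set S := b ^+ 2 + c ^+ 2 + d ^+ 2.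
have S0 : 0 <= S by rewrite /S; nra.
have [t0|tn0] := eqVneq (Num.sqrt S) 0.
  have := t0; move/eqP; rewrite sqrtr_eq0 => hS.
  have hb : b = 0 by rewrite /S in hS; nra.
  have hc : c = 0 by rewrite /S in hS; nra.
  have hd : d = 0 by rewrite /S in hS; nra.
  exists 1, 0, 0; split; first by rewrite expr1n expr0n /= !addr0.
  rewrite /psi /= -/S t0 hb hc hd; congr Quat; ring.
exists (b / Num.sqrt S), (c / Num.sqrt S), (d / Num.sqrt S); split.
  rewrite !expr_div_n sqr_sqrtr // -!mulrDl /S divff // -/S.
  by apply: contra tn0 => /eqP ->; rewrite sqrtr0.
by rewrite /psi /=; congr Quat; rewrite mulrC divfK.
Qed.


End S.

Theorem theorem2p11 (R : realType) (p : {poly R}) (hp : (1 < size p)%N) :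
  forall x : quat R,
    (exists a b : quat R, qsub (qeval p (qmul a b)) (qeval p (qmul b a)) = x)
    <-> (exists b c d : R, x = Quat 0 b c d).
Proof.
move=> x; split.
- case=> a [b <-].
  have er : qre (qmul b a) = qre (qmul a b).
    by move: a b => [? ? ? ?] [? ? ? ?]; rewrite /qmul /=; ring.
  have et : qi (qmul b a) ^+ 2 + qj (qmul b a) ^+ 2 + qk (qmul b a) ^+ 2
          = qi (qmul a b) ^+ 2 + qj (qmul a b) ^+ 2 + qk (qmul a b) ^+ 2.
    by clear er; move: a b => [? ? ? ?] [? ? ? ?]; rewrite /qmul /=; ring.
  have [u1 [u2 [u3 [hu e1]]]] := decomp (qmul a b).
  have [v1 [v2 [v3 [hv e2]]]] := decomp (qmul b a).
  set z1 := Complex _ _ in e1; set z2 := Complex _ _ in e2.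
  have ez : z2 = z1 by rewrite /z1 /z2 er et.
  rewrite e1 e2 ez !psi_qeval //.
  set P := hornC _ _.
  rewrite /qsub /qadd /qopp /psi /=.
  exists (cIm P * u1 + - (cIm P * v1)), (cIm P * u2 + - (cIm P * v2)),
    (cIm P * u3 + - (cIm P * v3)).
  by rewrite subrr.
- case=> [b [c [d ->]]].
  set X := b ^+ 2 + c ^+ 2 + d ^+ 2.
  have X0 : 0 <= X by rewrite /X; nra.
  have [s hs] := unbounded (g_size hp) (X + 1).
  set m := _.[s] in hs.
  have hm2 : (X + 1) ^+ 2 <= m ^+ 2.
    rewrite -[m ^+ 2]real_normK ?num_real //.
    have n0 := normr_ge0 m; move: hs n0; set M := `|m|; move=> hs n0; nra.
  have hmX : X < m ^+ 2 by nra.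
  have m0 : m != 0 by apply: contraTneq hmX => ->; rewrite expr0n /= -leNgt.
  pose y1 := b / m; pose y2 := c / m; pose y3 := d / m.
  have hy : y1 ^+ 2 + y2 ^+ 2 + y3 ^+ 2 < 1.
    have -> : y1 ^+ 2 + y2 ^+ 2 + y3 ^+ 2 = X / m ^+ 2 by rewrite /y1 /y2 /y3 /X; field.
    have m2 : 0 < m ^+ 2 by lra.
    by rewrite ltr_pdivrMr // mul1r.
  have [v1 [v2 [v3 [hv hvy]]]] : exists v1 v2 v3 : R,
      0 < v1 ^+ 2 + v2 ^+ 2 + v3 ^+ 2 /\ v1 * y1 + v2 * y2 + v3 * y3 = 0.
    have [/andP [/eqP h2 /eqP h3]|hn] := boolP ((y2 == 0) && (y3 == 0)).
      exists 0, 1, 0; split; first by rewrite expr0n expr1n /= add0r addr0 ltr01.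
      by rewrite h2 h3; ring.
    exists 0, (- y3), y2; split; last by ring.
    rewrite lt_def; apply/andP; split; last by nra.
    apply: contra hn => /eqP h; apply/andP; split; apply/eqP; nra.
  set N := v1 ^+ 2 + v2 ^+ 2 + v3 ^+ 2 in hv.
  set Y := y1 ^+ 2 + y2 ^+ 2 + y3 ^+ 2 in hy.
  pose h := 1 - Y / 4%:R.
  have h0 : 0 < h by rewrite /h; lra.
  pose k := Num.sqrt (h / N).
  have hk : k ^+ 2 = h / N by rewrite /k sqr_sqrtr // divr_ge0 // ltW.
  have k0 : 0 < k by rewrite /k sqrtr_gt0 divr_gt0.
  have hu : (k * v1 + y1 / 2%:R) ^+ 2 + (k * v2 + y2 / 2%:R) ^+ 2
           + (k * v3 + y3 / 2%:R) ^+ 2 = 1.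
    have -> : (k * v1 + y1 / 2%:R) ^+ 2 + (k * v2 + y2 / 2%:R) ^+ 2
           + (k * v3 + y3 / 2%:R) ^+ 2 = k ^+ 2 * N + k * (v1 * y1 + v2 * y2 + v3 * y3)
             + Y / 4%:R by rewrite /N /Y; field.
    by rewrite hvy hk divfK ?gt_eqF // mulr0 addr0 /h subrK.
  have hu' : (k * v1 - y1 / 2%:R) ^+ 2 + (k * v2 - y2 / 2%:R) ^+ 2
           + (k * v3 - y3 / 2%:R) ^+ 2 = 1.
    have -> : (k * v1 - y1 / 2%:R) ^+ 2 + (k * v2 - y2 / 2%:R) ^+ 2
           + (k * v3 - y3 / 2%:R) ^+ 2 = k ^+ 2 * N - k * (v1 * y1 + v2 * y2 + v3 * y3)
             + Y / 4%:R by rewrite /N /Y; field.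
    by rewrite hvy hk divfK ?gt_eqF // mulr0 subr0 /h subrK.
  have hs2 : 0 < (k * v1 + y1 / 2%:R + (k * v1 - y1 / 2%:R)) ^+ 2
     + (k * v2 + y2 / 2%:R + (k * v2 - y2 / 2%:R)) ^+ 2
     + (k * v3 + y3 / 2%:R + (k * v3 - y3 / 2%:R)) ^+ 2.
    have -> : (k * v1 + y1 / 2%:R + (k * v1 - y1 / 2%:R)) ^+ 2
     + (k * v2 + y2 / 2%:R + (k * v2 - y2 / 2%:R)) ^+ 2
     + (k * v3 + y3 / 2%:R + (k * v3 - y3 / 2%:R)) ^+ 2 = 4%:R * (k ^+ 2 * N)
      by rewrite /N; field.
    by rewrite hk divfK ?gt_eqF // mulr_gt0.
  have [a0 [b0 [eab eba]]] := key ((s%:C)%C * wr p) hu hu' hs2.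
  exists a0, b0; rewrite eab eba !psi_qeval //.
  have hI := Im_horn p (wr p) s; rewrite -/m in hI.
  rewrite /qsub /qadd /qopp /psi /= hI; congr Quat; first by rewrite subrr.
  + rewrite /y1; field; exact: m0.
  + rewrite /y2; field; exact: m0.
  + rewrite /y3; field; exact: m0.
Qed.
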